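(* Fix $p\ge 3$ and let $\lambda=\lambda_p=2\cos(\pi/p)$. Suppose that $\alpha$ and $\beta$ are hyperbolic fixed points of $G_p$ with associated hyperbolic $\lambda$-BQFs $Q_\alpha$ and $Q_\beta$, and let $V\in G_p$. Then $Q_\beta=Q_\alpha\circ V$ if and only if $\beta=V^{-1}\alpha$.
   Context: Let $S=\begin{pmatrix}1&\lambda\\0&1\end{pmatrix}$, $T=\begin{pmatrix}0&-1\\1&0\end{pmatrix}$, and $G_p=\langle S,T\rangle/\{\pm I\}$ (the Hecke group), acting on $\mathbb{C}\cup\{\infty\}$ by linear fractional transformations $z\mapsto\frac{az+b}{cz+d}$. An element $\begin{pmatrix}a&b\\c&d\end{pmatrix}$ is hyperbolic if $|a+d|>2$; a hyperbolic fixed point is a real number fixed by a hyperbolic element of $G_p$. A $\lambda$-BQF is a binary quadratic form $Q(x,y)=Ax^2+Bxy+Cy^2$, written $[A,B,C]$, with $A,B,C\in\mathbb{Z}[\lambda]$; its discriminant is $D=B^2-4AC$. For $M=\begin{pmatrix}a&b\\c&d\end{pmatrix}\in G_p$, $(Q\circ M)(x,y)=Q(ax+by,cx+dy)$. For a hyperbolic fixed point $\alpha$, choose a matrix $\begin{pmatrix}a&b\\c&d\end{pmatrix}$ representing a generator of the (cyclic) stabilizer of $\alpha$ in $G_p$, replaced by its inverse if necessary so that $\alpha=\frac{a-d+\sqrt{D}}{2c}$ where $D=(a+d)^2-4$ and $\sqrt{D}>0$; then $Q_\alpha=[c,d-a,-b]$ (this is independent of the choices). Such forms are called hyperbolic $\lambda$-BQFs.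 *)

(* Defs.v *)
From Stdlib Require Import Reals ZArith.
Open Scope R_scope.

(* 2x2 real matrices [[a, b], [c, d]] *)
Record mat2 := M2 { ma : R; mb : R; mc : R; md : R }.

Definition mmul (M N : mat2) : mat2 :=
  M2 (ma M * ma N + mb M * mc N) (ma M * mb N + mb M * md N)
     (mc M * ma N + md M * mc N) (mc M * mb N + md M * md N).

Definition mid : mat2 := M2 1 0 0 1.
Definition mneg (M : mat2) : mat2 := M2 (- ma M) (- mb M) (- mc M) (- md M).
(* inverse of a determinant-one matrix (all elements of G_p have det 1) *)
Definition minv (M : mat2) : mat2 := M2 (md M) (- mb M) (- mc M) (ma M).

Definition Smat (lam : R) : mat2 := M2 1 lam 0 1.
Definition Tmat : mat2 := M2 0 (-1) 1 0.

Definition lambda_p (p : nat) : R := 2 * cos (PI / INR p).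

(* The matrix group <S, T> generated by S and T (words in S, S^-1, T, T^-1).
   G_p is its quotient by {+-I}; we work with representative matrices. *)
Inductive in_Gp (lam : R) : mat2 -> Prop :=
  | Gp_id : in_Gp lam mid
  | Gp_S : forall M, in_Gp lam M -> in_Gp lam (mmul (Smat lam) M)
  | Gp_Sinv : forall M, in_Gp lam M -> in_Gp lam (mmul (minv (Smat lam)) M)
  | Gp_T : forall M, in_Gp lam M -> in_Gp lam (mmul Tmat M)
  | Gp_Tinv : forall M, in_Gp lam M -> in_Gp lam (mmul (minv Tmat) M).

Fixpoint mpow (M : mat2) (n : nat) : mat2 :=
  match n with O => mid | S k => mmul M (mpow M k) end.
Definition mzpow (M : mat2) (z : Z) : mat2 :=
  match z with
  | Z0 => mid
  | Zpos q => mpow M (Pos.to_nat q)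
  | Zneg q => mpow (minv M) (Pos.to_nat q)
  end.

(* Action by linear fractional transformations on real points:
   [mob_eq M x y] means  M x = y  in C u {oo}, for real finite x, y,
   i.e. c x + d <> 0 and y = (a x + b)/(c x + d). *)
Definition mob_eq (M : mat2) (x y : R) : Prop :=
  mc M * x + md M <> 0 /\ y = (ma M * x + mb M) / (mc M * x + md M).

Definition hyperbolic (M : mat2) : Prop := Rabs (ma M + md M) > 2.

Definition hyp_fixed_point (lam alpha : R) : Prop :=
  exists M, in_Gp lam M /\ hyperbolic M /\ mob_eq M alpha alpha.

(* M represents a generator of the stabilizer of alpha in G_p = <S,T>/{+-I} *)
Definition stab_generator (lam alpha : R) (M : mat2) : Prop :=
  in_Gp lam M /\ mob_eq M alpha alpha /\
  forall g, in_Gp lam g -> mob_eq g alpha alpha ->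
    exists n : Z, g = mzpow M n \/ g = mneg (mzpow M n).

(* binary quadratic forms [A, B, C] = A x^2 + B x y + C y^2 *)
Record bqf := BQF { qA : R; qB : R; qC : R }.

(* (Q o M)(x, y) = Q (a x + b y, c x + d y), coefficients written out *)
Definition bqf_comp (Q : bqf) (M : mat2) : bqf :=
  let a := ma M in let b := mb M in let c := mc M in let d := md M in
  BQF (qA Q * a * a + qB Q * a * c + qC Q * c * c)
      (2 * qA Q * a * b + qB Q * (a * d + b * c) + 2 * qC Q * c * d)
      (qA Q * b * b + qB Q * b * d + qC Q * d * d).

Definition is_Q_of (lam alpha : R) (Q : bqf) : Prop :=
  exists M : mat2,
    stab_generator lam alpha M /\ hyperbolic M /\ mc M <> 0 /\
    alpha = (ma M - md M + sqrt ((ma M + md M) ^ 2 - 4)) / (2 * mc M) /\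
    Q = BQF (mc M) (md M - ma M) (- mb M).

(* Main.v *)
Require Import Defs.
From Stdlib Require Import Reals ZArith Lra Lia Psatz.
Open Scope R_scope.

Definition det (M : mat2) := ma M * md M - mb M * mc M.
Definition tr (M : mat2) := ma M + md M.
Definition Qof (M : mat2) := BQF (mc M) (md M - ma M) (- mb M).

Lemma mat_eq a b c d a' b' c' d' : a = a' -> b = b' -> c = c' -> d = d' ->
  M2 a b c d = M2 a' b' c' d'.
Proof. intros; subst; reflexivity. Qed.

Lemma mmul_assoc A B C : mmul (mmul A B) C = mmul A (mmul B C).
Proof. destruct A, B, C; unfold mmul; simpl; apply mat_eq; ring. Qed.
Lemma mmul_id_l A : mmul mid A = A.
Proof. destruct A; unfold mmul, mid; simpl; apply mat_eq; ring. Qed.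
Lemma mmul_id_r A : mmul A mid = A.
Proof. destruct A; unfold mmul, mid; simpl; apply mat_eq; ring. Qed.
Lemma minv_mmul A B : minv (mmul A B) = mmul (minv B) (minv A).
Proof. destruct A, B; unfold mmul, minv; simpl; apply mat_eq; ring. Qed.
Lemma minv_minv A : minv (minv A) = A.
Proof. destruct A; unfold minv; simpl; apply mat_eq; ring. Qed.
Lemma det_mmul A B : det (mmul A B) = det A * det B.
Proof. destruct A, B; unfold det, mmul; simpl; ring. Qed.
Lemma det_minv A : det (minv A) = det A.
Proof. destruct A; unfold det, minv; simpl; ring. Qed.

Lemma in_Gp_mul lam M : in_Gp lam M -> forall N, in_Gp lam N -> in_Gp lam (mmul M N).
Proof.
  induction 1; intros N HN; try rewrite mmul_assoc.
  - rewrite mmul_id_l; exact HN.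
  - apply Gp_S; auto.
  - apply Gp_Sinv; auto.
  - apply Gp_T; auto.
  - apply Gp_Tinv; auto.
Qed.

Lemma gen_in lam g : in_Gp lam (mmul g mid) -> in_Gp lam g.
Proof. rewrite mmul_id_r; auto. Qed.

Lemma in_Gp_minv lam M : in_Gp lam M -> in_Gp lam (minv M).
Proof.
  induction 1; rewrite ?minv_mmul.
  - replace (minv mid) with mid by (unfold minv, mid; simpl; apply mat_eq; ring).
    constructor.
  - apply in_Gp_mul; auto. apply gen_in; apply Gp_Sinv; constructor.
  - apply in_Gp_mul; auto. rewrite minv_minv. apply gen_in; apply Gp_S; constructor.
  - apply in_Gp_mul; auto. apply gen_in; apply Gp_Tinv; constructor.
  - apply in_Gp_mul; auto. rewrite minv_minv. apply gen_in; apply Gp_T; constructor.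
Qed.

Lemma in_Gp_det lam M : in_Gp lam M -> det M = 1.
Proof.
  induction 1; try rewrite det_mmul; try rewrite det_minv; try rewrite IHin_Gp;
  unfold det, mid, Smat, Tmat; simpl; ring.
Qed.

Lemma mob_comp N M x y z : mob_eq N x y -> mob_eq M y z -> mob_eq (mmul M N) x z.
Proof.
  destruct N as [a b c d], M as [a' b' c' d']; unfold mob_eq, mmul; simpl.
  intros [H1 H2] [H3 H4]. subst.
  assert (E : (c' * a + d' * c) * x + (c' * b + d' * d) =
     (c * x + d) * (c' * ((a * x + b) / (c * x + d)) + d')) by (field; auto).
  split.
  - rewrite E. apply Rmult_integral_contrapositive; auto.
  - rewrite E. field. split; auto.
    replace (c' * (a * x + b) + d' * (c * x + d)) with
      ((c * x + d) * (c' * ((a * x + b) / (c * x + d)) + d')) by (field; auto).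
    apply Rmult_integral_contrapositive; auto.
Qed.

Lemma mob_inv V x y : det V = 1 -> mob_eq (minv V) x y -> mob_eq V y x.
Proof.
  destruct V as [a b c d]; unfold det, mob_eq, minv; simpl. intros Hd [H1 H2]. subst.
  assert (E : c * ((d * x + - b) / (- c * x + a)) + d = 1 / (- c * x + a)).
  { field_simplify; auto. replace (- c * b + d * a) with 1 by lra. reflexivity. }
  assert (E2 : a * ((d * x + - b) / (- c * x + a)) + b = x / (- c * x + a)).
  { replace (a * ((d * x + - b) / (- c * x + a)) + b) with ((a*d-b*c) * x / (- c * x + a)) by (field; auto).
    rewrite Hd; field; auto. }
  split.
  - rewrite E. apply Rmult_integral_contrapositive; split; try lra.
    apply Rinv_neq_0_compat; auto.
  - rewrite E, E2. field. auto.
Qed.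

Lemma tr_rec M N : det M = 1 -> tr (mmul M (mmul M N)) = tr M * tr (mmul M N) - tr N.
Proof.
  destruct M as [ma0 mb0 mc0 md0], N as [ma1 mb1 mc1 md1]; unfold det, tr, mmul; simpl. intro H.
  transitivity ((ma0 + md0) * ((ma0 * ma1 + mb0 * mc1) + (mc0 * mb1 + md0 * md1)) - (ma0*md0 - mb0*mc0) * (ma1 + md1)).
  ring. rewrite H; ring.
Qed.

Lemma tr_mid : tr mid = 2.
Proof. unfold tr, mid; simpl; ring. Qed.

Lemma tr_step M : det M = 1 -> Rabs (tr M) > 2 ->
  forall k, Rabs (tr (mpow M k)) < Rabs (tr (mpow M (S k))).
Proof.
  intros Hd Ht k. induction k.
  - simpl. rewrite mmul_id_r, tr_mid. rewrite Rabs_pos_eq by lra. lra.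
  - change (mpow M (S (S k))) with (mmul M (mmul M (mpow M k))).
    rewrite tr_rec by auto.
    change (mmul M (mpow M k)) with (mpow M (S k)) in *.
    set (u := tr (mpow M (S k))) in *. set (v := tr (mpow M k)) in *.
    assert (Rabs (tr M * u) = Rabs (tr M) * Rabs u) by apply Rabs_mult.
    assert (Rabs (tr M * u) <= Rabs (tr M * u - v) + Rabs v).
    { replace (tr M * u) with ((tr M * u - v) + v) at 1 by ring. apply Rabs_triang. }
    assert (0 <= Rabs v) by apply Rabs_pos.
    nra.
Qed.

Lemma tr_big M : det M = 1 -> Rabs (tr M) > 2 ->
  forall k, Rabs (tr M) < Rabs (tr (mpow M (S (S k)))).
Proof.
  intros Hd Ht k. induction k.
  - pose proof (tr_step M Hd Ht 1). assert (E : mpow M 1 = M) by (simpl; apply mmul_id_r). rewrite E in H. exact H.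
  - pose proof (tr_step M Hd Ht (S (S k))). lra.
Qed.

Lemma tr_minv M : tr (minv M) = tr M.
Proof. unfold tr, minv; simpl; ring. Qed.

Lemma tr_zpow M n : det M = 1 -> Rabs (tr M) > 2 -> n <> 0%Z -> n <> 1%Z -> n <> (-1)%Z ->
  Rabs (tr M) < Rabs (tr (mzpow M n)).
Proof.
  intros Hd Ht H0 H1 H2. destruct n as [|q|q]; unfold mzpow.
  - congruence.
  - destruct (Pos.to_nat q) as [|[|k]] eqn:E.
    + pose proof (Pos2Nat.is_pos q); lia.
    + exfalso; apply H1. f_equal. lia.
    + apply tr_big; auto.
  - destruct (Pos.to_nat q) as [|[|k]] eqn:E.
    + pose proof (Pos2Nat.is_pos q); lia.
    + exfalso; apply H2. change (-1)%Z with (Z.neg 1). f_equal. lia.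
    + rewrite <- tr_minv. apply tr_big. rewrite det_minv; auto. rewrite tr_minv; auto.
Qed.

Lemma Qcomp M V : bqf_comp (Qof M) V = Qof (mmul (minv V) (mmul M V)).
Proof.
  destruct M, V; unfold bqf_comp, Qof, mmul, minv; simpl.
  f_equal; ring.
Qed.

Lemma tr_conj M V : det V = 1 -> tr (mmul (minv V) (mmul M V)) = tr M.
Proof.
  destruct M as [a b c d], V as [a' b' c' d']; unfold det, tr, mmul, minv; simpl. intro H.
  transitivity ((a + d) * (a' * d' - b' * c')). ring. rewrite H; ring.
Qed.

Lemma L2 A B C a b c d x : a * d - b * c = 1 -> A * x ^ 2 + B * x + C = 0 ->
  - c * x + a <> 0 ->
  let Q' := bqf_comp (BQF A B C) (M2 a b c d) in
  2 * qA Q' * ((d * x + - b) / (- c * x + a)) + qB Q' = 2 * A * x + B.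
Proof.
  intros Hd HQ Hn Q'. unfold Q', bqf_comp; simpl.
  replace C with (- A * x ^ 2 - B * x) by lra.
  apply Rmult_eq_reg_r with (- c * x + a); auto.
  field_simplify; auto.
  transitivity ((a * d - b * c) * (2 * A * a * x - 2 * A * c * x ^ 2 + a * B - B * c * x)).
  ring. rewrite Hd; ring.
Qed.

Lemma root_char M alpha : det M = 1 -> hyperbolic M -> mc M <> 0 ->
  alpha = (ma M - md M + sqrt ((ma M + md M) ^ 2 - 4)) / (2 * mc M) ->
  (0 < (ma M + md M) ^ 2 - 4) /\ (2 * mc M * alpha + (md M - ma M) = sqrt ((ma M + md M) ^ 2 - 4)) /\ (mc M * alpha ^ 2 + (md M - ma M) * alpha + - mb M = 0).
Proof.
  destruct M as [a b c d]; unfold det, hyperbolic; cbn [ma mb mc md]. intros Hd Hh Hc Ha.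
  assert (HD : 0 < (a + d) ^ 2 - 4).
  { revert Hh. unfold Rabs. destruct (Rcase_abs (a + d)); intro; nra. }
  set (s := sqrt ((a + d) ^ 2 - 4)) in *.
  assert (Hs : s * s = (a + d) ^ 2 - 4) by (apply sqrt_sqrt; lra).
  assert (E : 2 * c * alpha + (d - a) = s) by (rewrite Ha; field; auto).
  split; [auto|split; [auto|]].
  apply Rmult_eq_reg_l with (4 * c); [|lra].
  replace (4 * c * (c * alpha ^ 2 + (d - a) * alpha + - b)) with
    ((2 * c * alpha + (d - a)) ^ 2 - (a + d) ^ 2 + 4 * (a * d - b * c)) by ring.
  rewrite E, Hd. nra.
Qed.

Definition disc (Q : bqf) := qB Q ^ 2 - 4 * qA Q * qC Q.
Lemma disc_comp Q V : disc (bqf_comp Q V) = det V ^ 2 * disc Q.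
Proof. destruct Q, V; unfold disc, bqf_comp, det; simpl; ring. Qed.

Definition negQ (Q : bqf) := BQF (- qA Q) (- qB Q) (- qC Q).

Lemma Qof_p1 X : Qof (mzpow X 1) = Qof X.
Proof. destruct X; unfold Qof; simpl; f_equal; ring. Qed.
Lemma Qof_np1 X : Qof (mneg (mzpow X 1)) = negQ (Qof X).
Proof. destruct X; unfold Qof, negQ; simpl; f_equal; ring. Qed.
Lemma Qof_m1 X : Qof (mzpow X (-1)) = negQ (Qof X).
Proof. destruct X; unfold Qof, negQ; simpl; f_equal; ring. Qed.
Lemma Qof_nm1 X : Qof (mneg (mzpow X (-1))) = Qof X.
Proof. destruct X; unfold Qof, negQ; simpl; f_equal; ring. Qed.

Lemma tr_p1 X : tr (mzpow X 1) = tr X.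
Proof. destruct X; unfold tr; simpl; ring. Qed.
Lemma tr_m1 X : tr (mzpow X (-1)) = tr X.
Proof. destruct X; unfold tr; simpl; ring. Qed.
Lemma tr_mneg X : tr (mneg X) = - tr X.
Proof. destruct X; unfold tr; simpl; ring. Qed.

Lemma abs_tr_pow X n : det X = 1 -> Rabs (tr X) > 2 -> n <> 0%Z ->
  Rabs (tr X) <= Rabs (tr (mzpow X n)).
Proof.
  intros Hd Ht H0.
  destruct (Z.eq_dec n 1) as [->|H1]. rewrite tr_p1; lra.
  destruct (Z.eq_dec n (-1)) as [->|H2]. rewrite tr_m1; lra.
  pose proof (tr_zpow X n Hd Ht H0 H1 H2). lra.
Qed.

Lemma abs_tr_pow_strict X n : det X = 1 -> Rabs (tr X) > 2 -> n <> 0%Z ->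
  n <> 1%Z -> n <> (-1)%Z -> Rabs (tr X) < Rabs (tr (mzpow X n)).
Proof. intros; apply tr_zpow; auto. Qed.

Lemma gen_tr lam x M N : stab_generator lam x M -> in_Gp lam N -> mob_eq N x x ->
  exists n, (N = mzpow M n \/ N = mneg (mzpow M n)) /\
            Rabs (tr N) = Rabs (tr (mzpow M n)).
Proof.
  intros [_ [_ G]] HN Hf. destruct (G N HN Hf) as [n [E|E]]; exists n; split; auto;
  subst; auto. rewrite tr_mneg, Rabs_Ropp; auto.
Qed.

Theorem lemma3p2 (p : nat) (Hp : (3 <= p)%nat) (alpha beta : R)
  (Ha : hyp_fixed_point (lambda_p p) alpha)
  (Hb : hyp_fixed_point (lambda_p p) beta)
  (Qa Qb : bqf)
  (HQa : is_Q_of (lambda_p p) alpha Qa)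
  (HQb : is_Q_of (lambda_p p) beta Qb)
  (V : mat2) (HV : in_Gp (lambda_p p) V) :
  Qb = bqf_comp Qa V <-> mob_eq (minv V) alpha beta.
Proof.
  clear Ha Hb.
  set (lam := lambda_p p) in *.
  destruct HQa as [Ma [HgA [HhA [HcA [HaA EQa]]]]].
  destruct HQb as [Mb [HgB [HhB [HcB [HbB EQb]]]]].
  assert (dA : det Ma = 1) by (apply (in_Gp_det lam); apply HgA).
  assert (dB : det Mb = 1) by (apply (in_Gp_det lam); apply HgB).
  assert (dV : det V = 1) by (apply (in_Gp_det lam); auto).
  destruct (root_char Ma alpha dA HhA HcA HaA) as [DA [RA PA]].
  destruct (root_char Mb beta dB HhB HcB HbB) as [DB [RB PB]].
  assert (sA : 0 < sqrt ((ma Ma + md Ma) ^ 2 - 4)) by (apply sqrt_lt_R0; auto).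
  assert (sB : 0 <= sqrt ((ma Mb + md Mb) ^ 2 - 4)) by apply sqrt_pos.
  split.
  - intro Heq.
    subst Qa Qb.
    destruct Ma as [aa ba ca da], Mb as [ab bb cb db], V as [a b c d].
    unfold det, Qof in *; cbn [ma mb mc md] in *.
    assert (HD := disc_comp (BQF ca (da - aa) (- ba)) (M2 a b c d)).
    rewrite <- Heq in HD. unfold disc, det in HD; cbn [qA qB qC ma mb mc md] in HD.
    rewrite dV in HD.
    assert (ED : (ab + db) ^ 2 - 4 = (aa + da) ^ 2 - 4) by nra.
    rewrite ED in RB.
    assert (HA' : cb = qA (bqf_comp (BQF ca (da - aa) (- ba)) (M2 a b c d))) by (rewrite <- Heq; reflexivity).
    assert (HB' : db - ab = qB (bqf_comp (BQF ca (da - aa) (- ba)) (M2 a b c d))) by (rewrite <- Heq; reflexivity).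
    assert (Hn : - c * alpha + a <> 0).
    { intro H0. apply HcB. rewrite HA'. unfold bqf_comp; cbn [qA qB qC ma mb mc md].
      replace a with (c * alpha) by lra.
      transitivity (c ^ 2 * (ca * alpha ^ 2 + (da - aa) * alpha + - ba)). ring.
      rewrite PA; ring. }
    pose proof (L2 ca (da - aa) (- ba) a b c d alpha dV PA Hn) as L. cbv zeta in L.
    rewrite <- HA', <- HB', RA in L.
    split; cbn [ma mb mc md minv]; auto.
    apply Rmult_eq_reg_l with (2 * cb); [|lra]. lra.
  - intro Hm.
    assert (HVb : mob_eq V beta alpha) by (apply mob_inv; auto).
    destruct HgA as [HinA [HfA GA]].
    destruct HgB as [HinB [HfB GB]].
    set (N := mmul (minv V) (mmul Ma V)).
    set (N' := mmul (minv (minv V)) (mmul Mb (minv V))).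
    assert (HN : in_Gp lam N).
    { apply in_Gp_mul. apply in_Gp_minv; auto. apply in_Gp_mul; auto. }
    assert (HN' : in_Gp lam N').
    { apply in_Gp_mul. rewrite minv_minv; auto. apply in_Gp_mul; auto. apply in_Gp_minv; auto. }
    assert (FN : mob_eq N beta beta).
    { apply mob_comp with alpha; auto. apply mob_comp with alpha; auto. }
    assert (FN' : mob_eq N' alpha alpha).
    { apply mob_comp with beta; auto. apply mob_comp with beta; auto. rewrite minv_minv; auto. }
    assert (tN : tr N = tr Ma) by (apply tr_conj; auto).
    assert (tN' : tr N' = tr Mb) by (apply tr_conj; rewrite det_minv; auto).
    assert (hA : Rabs (tr Ma) > 2) by exact HhA.
    assert (hB : Rabs (tr Mb) > 2) by exact HhB.
    destruct (gen_tr lam beta Mb N (conj HinB (conj HfB GB)) HN FN) as [n [En Tn]].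
    destruct (gen_tr lam alpha Ma N' (conj HinA (conj HfA GA)) HN' FN') as [m [Em Tm]].
    rewrite tN in Tn. rewrite tN' in Tm.
    assert (n0 : n <> 0%Z).
    { intro; subst n. simpl in Tn. rewrite tr_mid in Tn. rewrite (Rabs_pos_eq 2) in Tn; lra. }
    assert (m0 : m <> 0%Z).
    { intro; subst m. simpl in Tm. rewrite tr_mid in Tm. rewrite (Rabs_pos_eq 2) in Tm; lra. }
    assert (n1 : n = 1%Z \/ n = (-1)%Z).
    { destruct (Z.eq_dec n 1); auto. destruct (Z.eq_dec n (-1)); auto. exfalso.
      pose proof (abs_tr_pow_strict Mb n dB hB n0 n1 n2).
      pose proof (abs_tr_pow Ma m dA hA m0). lra. }
    assert (HC : bqf_comp Qa V = Qof N) by (rewrite EQa; apply Qcomp).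
    assert (Hbad : Qof N <> negQ Qb).
    { intro Hq. rewrite Hq in HC. subst Qa Qb.
      destruct Ma as [aa ba ca da], Mb as [ab bb cb db], V as [a b c d].
      unfold det, Qof, negQ in *; cbn [ma mb mc md qA qB qC] in *.
      destruct Hm as [Hn Hy]. cbn [ma mb mc md minv] in Hn, Hy.
      pose proof (L2 ca (da - aa) (- ba) a b c d alpha dV PA Hn) as L. cbv zeta in L.
      rewrite HC in L. cbn [qA qB] in L. rewrite <- Hy in L. lra. }
    destruct n1; subst n; destruct En as [En|En]; rewrite En in HC.
    + rewrite Qof_p1 in HC. rewrite HC; auto.
    + rewrite En, Qof_np1 in Hbad. rewrite EQb in Hbad. tauto.
    + rewrite En, Qof_m1 in Hbad. rewrite EQb in Hbad. tauto.
    + rewrite Qof_nm1 in HC. rewrite HC; auto.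
Qed.
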